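(* Consider the two-dimensional forward Euler finite difference scheme $\mathbf{u}_{ij}^{n+1}=\mathbf{u}_{ij}^n-\lambda^x(\mathbf{f}_{i+1/2,j}-\mathbf{f}_{i-1/2,j})-\lambda^y(\mathbf{g}_{i,j+1/2}-\mathbf{g}_{i,j-1/2})$, $\lambda^x=\Delta t/\Delta x$, $\lambda^y=\Delta t/\Delta y$, with numerical fluxes $\mathbf{f}_{i+1/2,j}=\alpha^x_{i+1/2,j}(\mathbf{w}^{x,+}_{i+1/2,j}-\mathbf{w}^{x,-}_{i+1/2,j})$ and $\mathbf{g}_{i,j+1/2}=\alpha^y_{i,j+1/2}(\mathbf{w}^{y,+}_{i,j+1/2}-\mathbf{w}^{y,-}_{i,j+1/2})$, where $\mathbf{w}^{x,\pm}_{i+1/2,j},\mathbf{w}^{y,\pm}_{i,j+1/2}\in\mathbb{R}^6$ are given interface values, $\alpha^x_{i+1/2,j}=\max\{\alpha^x(\mathbf{u}^n_{ij}),\alpha^x(\mathbf{u}^n_{i+1,j})\}$, $\alpha^y_{i,j+1/2}=\max\{\alpha^y(\mathbf{u}^n_{ij}),\alpha^y(\mathbf{u}^n_{i,j+1})\}$. Let $\mathbf{w}^{x,\pm}_{ij}=\mathbf{w}^{x,\pm}(\mathbf{u}^n_{ij})$, $\mathbf{w}^{y,\pm}_{ij}=\mathbf{w}^{y,\pm}(\mathbf{u}^n_{ij})$, and $\mathbf{q}^{x,+,*}_{ij}=\frac{1}{1-\hat w_N}(\mathbf{w}^{x,+}_{ij}-\hat w_N\mathbf{w}^{x,+}_{i+1/2,j})$,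 $\mathbf{q}^{x,-,*}_{ij}=\frac{1}{1-\hat w_1}(\mathbf{w}^{x,-}_{ij}-\hat w_1\mathbf{w}^{x,-}_{i-1/2,j})$, $\mathbf{q}^{y,+,*}_{ij}=\frac{1}{1-\hat w_N}(\mathbf{w}^{y,+}_{ij}-\hat w_N\mathbf{w}^{y,+}_{i,j+1/2})$, $\mathbf{q}^{y,-,*}_{ij}=\frac{1}{1-\hat w_1}(\mathbf{w}^{y,-}_{ij}-\hat w_1\mathbf{w}^{y,-}_{i,j-1/2})$. Assume that for all $i,j$: (1) $\mathbf{u}^n_{ij}\in\mathbb{U}_{\mathrm{ad}}$; (2) $\mathbf{q}^{x,\pm,*}_{ij}\in\mathbb{U}_{\mathrm{ad}}$ and $\mathbf{w}^{x,\pm}_{i+1/2,j}\in\mathbb{U}_{\mathrm{ad}}$; (3) $\mathbf{q}^{y,\pm,*}_{ij}\in\mathbb{U}_{\mathrm{ad}}$ and $\mathbf{w}^{y,\pm}_{i,j+1/2}\in\mathbb{U}_{\mathrm{ad}}$. Then the scheme is positivity preserving, i.e. $\mathbf{u}^{n+1}_{ij}\in\mathbb{U}_{\mathrm{ad}}$ for all $i,j$, provided $\left(\frac{\alpha^x}{\Delta x}+\frac{\alpha^y}{\Delta y}\right)\Delta t\le\hat w_1$, where $\alpha^x=\max_{i,j}\alpha^x(\mathbf{u}^n_{ij})$ and $\alpha^y=\max_{i,j}\alpha^y(\mathbf{u}^n_{ij})$.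
   Context: Ten-Moment equations in 2-D: conservative variable $\mathbf{u}=(\rho,\rho v_1,\rho v_2,E_{11},E_{12},E_{22})^\top$; pressure components $p_{11}=2E_{11}-\rho v_1^2$, $p_{12}=2E_{12}-\rho v_1v_2$, $p_{22}=2E_{22}-\rho v_2^2$; $\mathbb{U}_{\mathrm{ad}}=\{\mathbf{u}:\rho>0,\ \mathbf{p}\text{ positive definite}\}$. Fluxes: $\mathbf{f}(\mathbf{u})=\big(\rho v_1,\ \rho v_1^2+p_{11},\ \rho v_1v_2+p_{12},\ (E_{11}+p_{11})v_1,\ E_{12}v_1+\tfrac12(p_{11}v_2+p_{12}v_1),\ E_{22}v_1+p_{12}v_2\big)^\top$ and $\mathbf{g}(\mathbf{u})=\big(\rho v_2,\ \rho v_1v_2+p_{12},\ \rho v_2^2+p_{22},\ E_{11}v_2+p_{12}v_1,\ E_{12}v_2+\tfrac12(p_{12}v_2+p_{22}v_1),\ (E_{22}+p_{22})v_2\big)^\top$. Wave speeds $\alpha^x(\mathbf{u})=|v_1|+\sqrt{3p_{11}/\rho}$, $\alpha^y(\mathbf{u})=|v_2|+\sqrt{3p_{22}/\rho}$. $\mathbf{w}^{x,\pm}(\mathbf{u})=\frac12(\mathbf{u}\pm\mathbf{f}(\mathbf{u})/\alpha^x(\mathbf{u}))$, $\mathbf{w}^{y,\pm}(\mathbf{u})=\frac12(\mathbf{u}\pm\mathbf{g}(\mathbf{u})/\alpha^y(\mathbf{u}))$. Uniform rectangular mesh with nodes $(x_i,y_j)$, spacings $\Delta x,\Delta y$. $\hat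 w_1,\dots,\hat w_N$ are the normalized weights of the $N$-point Gauss–Lobatto rule with $N\ge4$, so $\hat w_1=\hat w_N$ (for $N=4$, $\hat w_1=1/12$). In the paper the interface values are $\mathbf{w}^{x,\pm}_{i+1/2,j}=\pm\mathbf{f}^\pm_{i+1/2,j}/\alpha^x_{i+1/2,j}$ with $\mathbf{f}^\pm_{i+1/2,j}$ WENO reconstructions of the split fluxes $\frac12(\mathbf{f}(\mathbf{u})\pm\alpha^x_{i+1/2,j}\mathbf{u})$ (similarly in $y$), possibly modified by a scaling limiter. *)

(* Defs.v *)
From Stdlib Require Import Reals ZArith.
Open Scope R_scope.

(* Conservative variable u = (rho, rho v1, rho v2, E11, E12, E22). *)
Record U6 : Type := mkU6 { rho : R; m1 : R; m2 : R; e11 : R; e12 : R; e22 : R }.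

Definition uadd (a b : U6) : U6 :=
  mkU6 (rho a + rho b) (m1 a + m1 b) (m2 a + m2 b)
       (e11 a + e11 b) (e12 a + e12 b) (e22 a + e22 b).
Definition uscale (c : R) (a : U6) : U6 :=
  mkU6 (c * rho a) (c * m1 a) (c * m2 a) (c * e11 a) (c * e12 a) (c * e22 a).
Definition usub (a b : U6) : U6 := uadd a (uscale (-1) b).

Definition v1 (u : U6) : R := m1 u / rho u.
Definition v2 (u : U6) : R := m2 u / rho u.
Definition p11 (u : U6) : R := 2 * e11 u - rho u * v1 u ^ 2.
Definition p12 (u : U6) : R := 2 * e12 u - rho u * v1 u * v2 u.
Definition p22 (u : U6) : R := 2 * e22 u - rho u * v2 u ^ 2.

Definition pos_def2 (a b c : R) : Prop :=
  forall x y : R, (x <> 0 \/ y <> 0) -> a * x * x + 2 * b * x * y + c * y * y > 0.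

Definition Uad (u : U6) : Prop := rho u > 0 /\ pos_def2 (p11 u) (p12 u) (p22 u).

Definition fluxf (u : U6) : U6 :=
  mkU6 (rho u * v1 u)
       (rho u * v1 u ^ 2 + p11 u)
       (rho u * v1 u * v2 u + p12 u)
       ((e11 u + p11 u) * v1 u)
       (e12 u * v1 u + / 2 * (p11 u * v2 u + p12 u * v1 u))
       (e22 u * v1 u + p12 u * v2 u).

Definition fluxg (u : U6) : U6 :=
  mkU6 (rho u * v2 u)
       (rho u * v1 u * v2 u + p12 u)
       (rho u * v2 u ^ 2 + p22 u)
       (e11 u * v2 u + p12 u * v1 u)
       (e12 u * v2 u + / 2 * (p12 u * v2 u + p22 u * v1 u))
       ((e22 u + p22 u) * v2 u).

Definition alphax (u : U6) : R := Rabs (v1 u) + sqrt (3 * p11 u / rho u).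
Definition alphay (u : U6) : R := Rabs (v2 u) + sqrt (3 * p22 u / rho u).

Definition wxp (u : U6) : U6 := uscale (/ 2) (uadd u (uscale (/ alphax u) (fluxf u))).
Definition wxm (u : U6) : U6 := uscale (/ 2) (usub u (uscale (/ alphax u) (fluxf u))).
Definition wyp (u : U6) : U6 := uscale (/ 2) (uadd u (uscale (/ alphay u) (fluxg u))).
Definition wym (u : U6) : U6 := uscale (/ 2) (usub u (uscale (/ alphay u) (fluxg u))).

(* Normalized endpoint weight of the N-point Gauss-Lobatto rule on a unit
   interval: w_1 = w_N = 1/(N(N-1)) (e.g. 1/12 for N = 4). *)
Definition gl_w1 (N : nat) : R := / (INR N * (INR N - 1)).
Definition gl_wN (N : nat) : R := gl_w1 N.

(* Mesh data: u : Z -> Z -> U6 is u^n_{ij}.  Interface values are indexed by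
   the left/lower cell: Wxp i j = w^{x,+}_{i+1/2,j}, Wyp i j = w^{y,+}_{i,j+1/2}. *)
Definition ax_half (u : Z -> Z -> U6) (i j : Z) : R :=
  Rmax (alphax (u i j)) (alphax (u (i + 1)%Z j)).
Definition ay_half (u : Z -> Z -> U6) (i j : Z) : R :=
  Rmax (alphay (u i j)) (alphay (u i (j + 1)%Z)).

Definition numflux_f (u Wxp Wxm : Z -> Z -> U6) (i j : Z) : U6 :=
  uscale (ax_half u i j) (usub (Wxp i j) (Wxm i j)).
Definition numflux_g (u Wyp Wym : Z -> Z -> U6) (i j : Z) : U6 :=
  uscale (ay_half u i j) (usub (Wyp i j) (Wym i j)).

Definition euler_step (dt dx dy : R) (u Wxp Wxm Wyp Wym : Z -> Z -> U6)
  (i j : Z) : U6 :=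
  usub (usub (u i j)
         (uscale (dt / dx) (usub (numflux_f u Wxp Wxm i j)
                                 (numflux_f u Wxp Wxm (i - 1)%Z j))))
       (uscale (dt / dy) (usub (numflux_g u Wyp Wym i j)
                               (numflux_g u Wyp Wym i (j - 1)%Z))).

Definition qxp (N : nat) (u Wxp : Z -> Z -> U6) (i j : Z) : U6 :=
  uscale (/ (1 - gl_wN N)) (usub (wxp (u i j)) (uscale (gl_wN N) (Wxp i j))).
Definition qxm (N : nat) (u Wxm : Z -> Z -> U6) (i j : Z) : U6 :=
  uscale (/ (1 - gl_w1 N)) (usub (wxm (u i j)) (uscale (gl_w1 N) (Wxm (i - 1)%Z j))).
Definition qyp (N : nat) (u Wyp : Z -> Z -> U6) (i j : Z) : U6 :=
  uscale (/ (1 - gl_wN N)) (usub (wyp (u i j)) (uscale (gl_wN N) (Wyp i j))).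
Definition qym (N : nat) (u Wym : Z -> Z -> U6) (i j : Z) : U6 :=
  uscale (/ (1 - gl_w1 N)) (usub (wym (u i j)) (uscale (gl_w1 N) (Wym i (j - 1)%Z))).

Definition is_max_over (f : Z -> Z -> R) (a : R) : Prop :=
  (forall i j, f i j <= a) /\ exists i j, f i j = a.

(* Main.v *)
Require Import Defs.
From Stdlib Require Import Reals ZArith Lra.
Open Scope R_scope.

Definition Kf (u : U6) (x y : R) : R :=
  2 * (e11 u * x * x + 2 * e12 u * x * y + e22 u * y * y)
  - (m1 u * x + m2 u * y) ^ 2 / rho u.

Lemma qf_eq u x y : rho u <> 0 ->
  p11 u * x * x + 2 * p12 u * x * y + p22 u * y * y = Kf u x y.
Proof. intros H. unfold Kf, p11, p12, p22, v1, v2. field. auto. Qed.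

Lemma Uad_iff u : rho u > 0 -> (forall x y, (x <> 0 \/ y <> 0) -> Kf u x y > 0) -> Uad u.
Proof.
  intros H1 H2. split; auto. intros x y Hxy. rewrite qf_eq by lra. auto.
Qed.

Lemma Uad_K u x y : Uad u -> (x <> 0 \/ y <> 0) -> Kf u x y > 0.
Proof.
  intros [H1 H2] Hxy. rewrite <- qf_eq by lra. apply H2; auto.
Qed.

Lemma conv_ineq sa sb ra rb : ra > 0 -> rb > 0 ->
  (sa + sb) ^ 2 / (ra + rb) <= sa ^ 2 / ra + sb ^ 2 / rb.
Proof.
  intros Ha Hb.
  assert (E : sa ^ 2 / ra + sb ^ 2 / rb - (sa + sb) ^ 2 / (ra + rb)
              = (sa * rb - sb * ra) ^ 2 / (ra * rb * (ra + rb))) by (field; lra).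
  assert (0 <= (sa * rb - sb * ra) ^ 2 / (ra * rb * (ra + rb))).
  { unfold Rdiv. apply Rmult_le_pos. apply pow2_ge_0.
    left. apply Rinv_0_lt_compat.
    apply Rmult_lt_0_compat; [apply Rmult_lt_0_compat|]; lra. }
  lra.
Qed.

Lemma Uad_add a b : Uad a -> Uad b -> Uad (uadd a b).
Proof.
  intros Ha Hb. pose proof (proj1 Ha). pose proof (proj1 Hb).
  apply Uad_iff.
  - simpl. lra.
  - intros x y Hxy. pose proof (Uad_K a x y Ha Hxy). pose proof (Uad_K b x y Hb Hxy).
    unfold Kf in *. simpl.
    pose proof (conv_ineq (m1 a * x + m2 a * y) (m1 b * x + m2 b * y) (rho a) (rho b) H H0).
    replace ((m1 a + m1 b) * x + (m2 a + m2 b) * y) with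
      ((m1 a * x + m2 a * y) + (m1 b * x + m2 b * y)) by ring.
    lra.
Qed.

Lemma Uad_scale c a : c > 0 -> Uad a -> Uad (uscale c a).
Proof.
  intros Hc Ha. pose proof (proj1 Ha). apply Uad_iff.
  - simpl. apply Rmult_lt_0_compat; lra.
  - intros x y Hxy. pose proof (Uad_K a x y Ha Hxy).
    assert (E : Kf (uscale c a) x y = c * Kf a x y).
    { unfold Kf; simpl. field. lra. }
    rewrite E. apply Rmult_lt_0_compat; lra.
Qed.

Definition addnn (a : U6) (c : R) (b : U6) : U6 := uadd a (uscale c b).

Lemma Uad_addnn a c b : Uad a -> 0 <= c -> Uad b -> Uad (addnn a c b).
Proof.
  intros Ha Hc Hb. unfold addnn. destruct (Req_dec c 0) as [E|E].
  - subst c. replace (uadd a (uscale 0 b)) with a; auto.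
    destruct a; unfold uadd, uscale; simpl. f_equal; ring.
  - apply Uad_add; auto. apply Uad_scale; auto. lra.
Qed.

Lemma alphax_pos u : Uad u -> alphax u > 0.
Proof.
  intros [H1 H2]. specialize (H2 1 0 (or_introl R1_neq_R0)).
  assert (p11 u > 0) by lra.
  unfold alphax. pose proof (Rabs_pos (v1 u)).
  assert (0 < sqrt (3 * p11 u / rho u)).
  { apply sqrt_lt_R0. apply Rdiv_lt_0_compat; lra. }
  lra.
Qed.

Lemma alphay_pos u : Uad u -> alphay u > 0.
Proof.
  intros [H1 H2]. specialize (H2 0 1 (or_intror R1_neq_R0)).
  assert (p22 u > 0) by lra.
  unfold alphay. pose proof (Rabs_pos (v2 u)).
  assert (0 < sqrt (3 * p22 u / rho u)).
  { apply sqrt_lt_R0. apply Rdiv_lt_0_compat; lra. }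
  lra.
Qed.

Definition combo (N : nat) (dt dx dy : R) (u Wxp Wxm Wyp Wym : Z -> Z -> U6)
  (i j : Z) (tx : R) : U6 :=
  let w := gl_w1 N in
  let ty := 1 - tx in
  let ap := ax_half u i j in
  let am := ax_half u (i - 1)%Z j in
  let bp := ay_half u i j in
  let bm := ay_half u i (j - 1)%Z in
  let lx := dt / dx in
  let ly := dt / dy in
  addnn (addnn (addnn (addnn (addnn (addnn (addnn (addnn (addnn (addnn (addnn
    (uscale (tx * (1 - w)) (qxp N u Wxp i j))
     (tx * (1 - w)) (qxm N u Wxm i j))
     (ty * (1 - w)) (qyp N u Wyp i j))
     (ty * (1 - w)) (qym N u Wym i j))
     (tx * w - lx * ap) (Wxp i j))
     (tx * w - lx * am) (Wxm (i - 1)%Z j))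
     (lx * ap) (Wxm i j))
     (lx * am) (Wxp (i - 1)%Z j))
     (ty * w - ly * bp) (Wyp i j))
     (ty * w - ly * bm) (Wym i (j - 1)%Z))
     (ly * bp) (Wym i j))
     (ly * bm) (Wyp i (j - 1)%Z).

Lemma U6_ext a b : rho a = rho b -> m1 a = m1 b -> m2 a = m2 b ->
  e11 a = e11 b -> e12 a = e12 b -> e22 a = e22 b -> a = b.
Proof. destruct a, b; simpl; intros; subst; reflexivity. Qed.

Lemma decomp N dt dx dy u Wxp Wxm Wyp Wym i j tx :
  1 - gl_w1 N <> 0 -> dx <> 0 -> dy <> 0 ->
  alphax (u i j) <> 0 -> alphay (u i j) <> 0 ->
  euler_step dt dx dy u Wxp Wxm Wyp Wym i j = combo N dt dx dy u Wxp Wxm Wyp Wym i j tx.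
Proof.
  intros Hw Hx Hy Ha Hb.
  unfold euler_step, combo, numflux_f, numflux_g, qxp, qxm, qyp, qym,
    wxp, wxm, wyp, wym, gl_wN.
  apply U6_ext; cbn [rho m1 m2 e11 e12 e22 uadd uscale usub addnn];
  (field; tauto).
Qed.

Theorem theorem4 (N : nat) (dt dx dy ax ay : R)
  (u Wxp Wxm Wyp Wym : Z -> Z -> U6) :
  (4 <= N)%nat ->
  0 < dt -> 0 < dx -> 0 < dy ->
  (forall i j, Uad (u i j)) ->
  (forall i j, Uad (qxp N u Wxp i j) /\ Uad (qxm N u Wxm i j)
               /\ Uad (Wxp i j) /\ Uad (Wxm i j)) ->
  (forall i j, Uad (qyp N u Wyp i j) /\ Uad (qym N u Wym i j)
               /\ Uad (Wyp i j) /\ Uad (Wym i j)) ->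
  is_max_over (fun i j => alphax (u i j)) ax ->
  is_max_over (fun i j => alphay (u i j)) ay ->
  (ax / dx + ay / dy) * dt <= gl_w1 N ->
  forall i j, Uad (euler_step dt dx dy u Wxp Wxm Wyp Wym i j).
Proof.
  intros HN Hdt Hdx Hdy Hu Hx Hy [Hax [ix [jx Eax]]] [Hay [iy [jy Eay]]] Hcfl i j.
  assert (HN4 : 4 <= INR N) by (replace 4 with (INR 4) by (simpl; lra); apply le_INR; auto).
  assert (Hw0 : 0 < gl_w1 N).
  { unfold gl_w1. apply Rinv_0_lt_compat. apply Rmult_lt_0_compat; lra. }
  assert (Hw1 : gl_w1 N < 1).
  { unfold gl_w1. assert (12 <= INR N * (INR N - 1)) by nra.
    rewrite <- Rinv_1. apply Rinv_lt_contravar; lra. }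
  set (w := gl_w1 N) in *.
  assert (Haxp : 0 < ax) by (rewrite <- Eax; apply alphax_pos; auto).
  assert (Hayp : 0 < ay) by (rewrite <- Eay; apply alphay_pos; auto).
  set (mx := dt / dx * ax). set (my := dt / dy * ay).
  assert (Hmx : 0 < mx) by (unfold mx, Rdiv; repeat apply Rmult_lt_0_compat; auto; apply Rinv_0_lt_compat; auto).
  assert (Hmy : 0 < my) by (unfold my, Rdiv; repeat apply Rmult_lt_0_compat; auto; apply Rinv_0_lt_compat; auto).
  assert (Hsum : mx + my <= w).
  { replace (mx + my) with ((ax / dx + ay / dy) * dt) by (unfold mx, my; field; lra). auto. }
  set (tx := mx / (mx + my)).
  assert (Htx : tx * (mx + my) = mx) by (unfold tx; field; lra).
  assert (Hty : (1 - tx) * (mx + my) = my) by (unfold tx; field; lra).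
  assert (Htx0 : 0 < tx) by (unfold tx; apply Rdiv_lt_0_compat; lra).
  assert (Hty0 : 0 < 1 - tx) by nra.
  assert (Hlx : 0 < dt / dx) by (apply Rdiv_lt_0_compat; auto).
  assert (Hly : 0 < dt / dy) by (apply Rdiv_lt_0_compat; auto).
  assert (Bx : forall i j, 0 <= ax_half u i j <= ax).
  { intros a b. unfold ax_half. split.
    - apply Rle_trans with (alphax (u a b)). left; apply alphax_pos; auto. apply Rmax_l.
    - apply Rmax_lub; apply (Hax _ _). }
  assert (By : forall i j, 0 <= ay_half u i j <= ay).
  { intros a b. unfold ay_half. split.
    - apply Rle_trans with (alphay (u a b)). left; apply alphay_pos; auto. apply Rmax_l.
    - apply Rmax_lub; apply (Hay _ _). }
  assert (Cx : forall a, 0 <= a <= ax -> 0 <= tx * w - dt / dx * a).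
  { intros a Ha. assert (tx * (mx + my) <= tx * w) by (apply Rmult_le_compat_l; lra).
    assert (dt / dx * a <= mx) by (unfold mx; apply Rmult_le_compat_l; lra). lra. }
  assert (Cy : forall a, 0 <= a <= ay -> 0 <= (1 - tx) * w - dt / dy * a).
  { intros a Ha. assert ((1 - tx) * (mx + my) <= (1 - tx) * w) by (apply Rmult_le_compat_l; lra).
    assert (dt / dy * a <= my) by (unfold my; apply Rmult_le_compat_l; lra). lra. }
  rewrite (decomp N dt dx dy u Wxp Wxm Wyp Wym i j tx); try lra;
    try (apply Rgt_not_eq; apply alphax_pos; auto);
    try (apply Rgt_not_eq; apply alphay_pos; auto).
  unfold combo. fold w.
  destruct (Hx i j) as [Q1 [Q2 [Q3 Q4]]].
  destruct (Hx (i - 1)%Z j) as [_ [_ [Q5 Q6]]].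
  destruct (Hy i j) as [R1 [R2 [R3 R4]]].
  destruct (Hy i (j - 1)%Z) as [_ [_ [R5 R6]]].
  pose proof (Bx i j). pose proof (Bx (i - 1)%Z j).
  pose proof (By i j). pose proof (By i (j - 1)%Z).
  repeat apply Uad_addnn; auto;
    try (apply Cx; auto); try (apply Cy; auto);
    try (apply Rmult_le_pos; lra).
  - apply Uad_scale; auto. apply Rmult_lt_0_compat; lra.
  - fold w; lra.
Qed.
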